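(* Let $(X,\mathcal{O})$ be a sober topological space and $P \subseteq X$ with subspace topology $\mathcal{O}|_P=\{U\cap P\mid U\in\mathcal{O}\}$. Let $j : \mathcal{O} \to \mathcal{O}$ be $j(U) = \bigcup\{V \in \mathcal{O} \mid V \cap P \subseteq U \cap P\}$ and $\widetilde{P} = \{U \in \mathcal{O} \mid j(U)=U\}$. For $x \in X$ let $\widetilde{x} = X \setminus \overline{\{x\}}$. Then the following are equivalent: (i) $(P,\mathcal{O}|_P)$ is sober; (ii) for every $x \in X$, $x \in P$ if and only if $\widetilde{x} \in \widetilde{P}$.
   Context: A point of a frame $L$ is a completely prime filter: an upward-closed subset containing the top, closed under binary meets, and such that if $\bigvee S$ belongs to it then some element of $S$ does. For a space $(X,\mathcal{O})$ and $x\in X$, $\mathcal{F}_x=\{U\in\mathcal{O}\mid x\in U\}$; the space is sober if every point of the frame $\mathcal{O}$ (ordered by inclusion) is $\mathcal{F}_x$ for a unique $x$. *)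

(* Defs.v *)
From HB Require Import structures.
From mathcomp Require Import all_boot all_classical topology.
Set Implicit Arguments. Unset Strict Implicit. Unset Printing Implicit Defensive.
Local Open Scope classical_set_scope.

(* A point of the frame of opens O (ordered by inclusion; binary meet = intersection,
   arbitrary join = union): a completely prime filter. *)
Definition frame_point (T : Type) (O : set (set T)) (F : set (set T)) : Prop :=
  [/\ F `<=` O,
      (forall U V, F U -> O V -> U `<=` V -> F V),
      F setT,
      (forall U V, F U -> F V -> F (U `&` V)) &
      (forall S : set (set T), S `<=` O ->
         F (\bigcup_(V in S) V) -> exists2 V, S V & F V)].

Definition point_filter (T : Type) (O : set (set T)) (x : T) : set (set T) :=
  [set U | O U /\ U x].

Definition sober_family (T : Type) (O : set (set T)) : Prop :=
  forall F, frame_point O F -> exists! x : T, F = point_filter O x.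

Definition induced_opens (T : topologicalType) (P : set T) : set (set {x | P x}) :=
  [set V | exists2 U : set T, open U & V = (@proj1_sig T P) @^-1` U].

Definition jP (T : topologicalType) (P : set T) (U : set T) : set T :=
  \bigcup_(V in [set V : set T | open V /\ V `&` P `<=` U `&` P]) V.

Definition Ptilde (T : topologicalType) (P : set T) : set (set T) :=
  [set U | open U /\ jP P U = U].

Definition xtilde (T : topologicalType) (x : T) : set T :=
  ~` closure [set x].

(* Main.v *)
Require Import Defs.
From HB Require Import structures.
From mathcomp Require Import all_boot all_classical topology.
Local Open Scope classical_set_scope.

Lemma notin_sub_xtilde (T : topologicalType) (x : T) (U : set T) :
  open U -> ~ U x -> U `<=` xtilde x.
Proof.
move=> oU nUx y Uy cy.
have := cy U (open_nbhs_nbhs (conj oU Uy)).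
by case=> z [/= -> Uz]; apply: nUx.
Qed.

Lemma xtilde_open (T : topologicalType) (x : T) : open (xtilde x).
Proof. exact/closed_openC/closed_closure. Qed.

Lemma xtilde_notx (T : topologicalType) (x : T) : ~ xtilde x x.
Proof. by apply; apply: subset_closure. Qed.

Lemma Ptilde_intro (T : topologicalType) (P : set T) (U : set T) : open U ->
  (forall V, open V -> V `&` P `<=` U `&` P -> V `<=` U) -> Ptilde P U.
Proof.
move=> oU H; rewrite /Ptilde /=; split=> //; apply/seteqP; split.
  by move=> y [V [oV VP] Vy]; exact: (H V oV VP).
by move=> y Uy; exists U => //; split.
Qed.

Lemma Ptilde_elim (T : topologicalType) (P : set T) (U : set T) : Ptilde P U ->
  (forall V, open V -> V `&` P `<=` U `&` P -> V `<=` U).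
Proof.
rewrite /Ptilde /= => -[oU e] V oV VP y Vy; rewrite -e; by exists V.
Qed.

Lemma pf_frame (T : topologicalType) (x : T) : frame_point (@open T) (point_filter open x).
Proof.
split.
- by move=> U [].
- by move=> U V [_ Ux] oV UV; split=> //; apply: UV.
- by split=> //; exact: openT.
- by move=> U V [oU Ux] [oV Vx]; split; [exact: openI | split].
- move=> S SO [_ [V SV Vx]]; exists V => //; split=> //; exact: SO.
Qed.

Arguments notin_sub_xtilde {T x U}.
Arguments Ptilde_elim {T P U}.
Arguments Ptilde_intro {T P U}.
Arguments xtilde_notx {T x}.
Arguments xtilde_open {T x}.
Arguments pf_frame {T}.

Theorem mainTheorem3 (T : topologicalType) (P : set T)
  (hsober : @sober_family T (@open T)) :
  sober_family (@induced_opens T P) <->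
  (forall x : T, P x <-> @Ptilde T P (@xtilde T x)).
Proof.
split.
- move=> sP x; split.
    move=> Px; apply: Ptilde_intro; first exact: xtilde_open.
    move=> V oV VP; apply: notin_sub_xtilde => // Vx.
    by case: (VP x (conj Vx Px)) => h _; exact: xtilde_notx h.
  move=> Ptx; have Hmax := Ptilde_elim Ptx.
  pose G := [set W : set {y | P y} | exists U, [/\ open U, U x & W = @proj1_sig T P @^-1` U]].
  have FG : @frame_point {y | P y} (@induced_opens T P) G.
    split.
    - by move=> W [U [oU _ ->]]; exists U.
    - move=> W W' [U [oU Ux eW]] [U' oU' eW'] WW'.
      exists (U `|` U'); split; [exact: openU | by left |].
      rewrite eW'; apply/seteqP; split=> z /=; first by right.
      case=> h; last by [].
      have : W z by rewrite eW.
      by move/WW'; rewrite eW'.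
    - by exists setT; split; [exact: openT | by [] | rewrite preimage_setT].
    - move=> W W' [U [oU Ux ->]] [U' [oU' U'x ->]].
      exists (U `&` U'); split; [exact: openI | by split | by rewrite preimage_setI].
    - move=> S SI [U [oU Ux eS]]; apply: contrapT => nG.
      suff : U `<=` xtilde x by move/(_ x Ux); exact: xtilde_notx.
      apply: Hmax => // y [Uy Py]; split=> //.
      have : (\bigcup_(V in S) V) (exist _ y Py) by rewrite eS.
      case=> W SW Wz.
      have [UW oUW eW] := SI W SW.
      have UWy : UW y by move: Wz; rewrite eW.
      apply: (notin_sub_xtilde oUW) => // UWx.
      by apply: nG; exists W => //; exists UW.
  have [p [Gp _]] := sP G FG.
  have [x0 [_ u]] := hsober _ (pf_frame x).
  suff -> : x = @proj1_sig T P p by exact: (@proj2_sig T P).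
  have e1 := u x erefl.
  rewrite -e1; apply: u.
  apply/funext => U; apply/propext; split.
    move=> [oU Ux]; split=> //.
    have : G (@proj1_sig T P @^-1` U) by exists U.
    by rewrite Gp => -[].
  move=> [oU Up]; split=> //.
  have : @point_filter {y | P y} (@induced_opens T P) p (@proj1_sig T P @^-1` U).
    by split=> //; exists U.
  rewrite -Gp => -[U' [oU' U'x eU]].
  apply: contrapT => nUx.
  have sub := notin_sub_xtilde oU nUx.
  have : U' `<=` xtilde x.
    apply: Hmax => // y [U'y Py]; split=> //; apply: sub.
    have : (@proj1_sig T P @^-1` U') (exist _ y Py) by [].
    by rewrite -eU.
  by move/(_ x U'x); exact: xtilde_notx.
- move=> H G [GO Gup GT GI Gcp].
  pose F := [set U : set T | open U /\ G (@proj1_sig T P @^-1` U)].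
  have FF : frame_point open F.
    split.
    - by move=> U [].
    - move=> U V [oU GU] oV UV; split=> //; apply: Gup GU _ _.
        by exists V.
      by move=> z /UV.
    - by split; [exact: openT | rewrite preimage_setT].
    - move=> U V [oU GU] [oV GV]; split; first exact: openI.
      by rewrite preimage_setI; exact: GI.
    - move=> S SO [oS GS].
      pose S' := [set W | exists2 V, S V & W = @proj1_sig T P @^-1` V].
      have e : @proj1_sig T P @^-1` (\bigcup_(V in S) V) = \bigcup_(W in S') W.
        apply/seteqP; split=> z.
          by case=> V SV Vz; exists (@proj1_sig T P @^-1` V) => //; exists V.
        by case=> W [V SV ->] Vz; exists V.
      rewrite e in GS.
      have S'O : S' `<=` @induced_opens T P.
        by move=> W [V SV ->]; exists V => //; exact: SO.
      have [W [V SV eW] GW] := Gcp S' S'O GS.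
      by exists V => //; split; [exact: SO | rewrite -eW].
  have [x [Fx xuniq]] := hsober F FF.
  have Px : P x.
    apply/H; apply: Ptilde_intro; first exact: xtilde_open.
    move=> V oV VP; apply: notin_sub_xtilde => // Vx.
    have FV : F V by rewrite Fx.
    have : F (xtilde x).
      split; first exact: xtilde_open.
      apply: Gup FV.2 _ _; first by exists (xtilde x) => //; exact: xtilde_open.
      by move=> [y Py] /= Vy; case: (VP y (conj Vy Py)).
    by rewrite Fx => -[_]; exact: xtilde_notx.
  exists (exist _ x Px); split.
    apply/funext => W; apply/propext; split.
      move=> GW; have [U oU eW] := GO W GW.
      subst W; split; first by exists U.
      have : F U := conj oU GW.
      by rewrite Fx => -[].
    move=> [[U oU eW] Ux]; subst W.
    have : F U by rewrite Fx.
    by case.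
  move=> q Gq.
  have e : x = @proj1_sig T P q.
    apply: xuniq; apply/funext => U; apply/propext; split.
      move=> [oU GU]; split=> //.
      by move: GU; rewrite Gq => -[].
    move=> [oU Uq]; split=> //.
    by rewrite Gq; split=> //; exists U.
  case: q Gq e => q Pq Gq /= e; subst q.
  by congr exist; exact: Prop_irrelevance.
Qed.
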